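(* Let $a,b$ be positive integers with $3\mid a$ and $3\mid b$. If the Aztec rectangle $\mathcal{AR}_{a,b}$ has a cover by L-trominoes, then $\mathcal{AR}_{a+2,b+2}$ has a cover by L-trominoes.
   Context: A cell is a unit square $[i,i+1]\times[j,j+1]$ with $i,j\in\mathbb{Z}$, labelled $(i,j)$. An L-tromino is a set of three cells equal to a $2\times 2$ block of cells with one cell removed. A cover of a region $R$ (a finite edge-connected set of cells) is a set of pairwise disjoint L-trominoes contained in $R$ whose union is $R$. For positive integers $a,b$, the Aztec rectangle $\mathcal{AR}_{a,b}$ is (up to translation) the region consisting of the cells $(i,j)\in\mathbb{Z}^2$ with $0\le i+j\le 2b$ and $1\le j-i\le 2a+1$; it has $a$ cells along its southwestern side and $b$ cells along its northwestern side. *)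

(* Defs.v *)
From Stdlib Require Import ZArith List.
Open Scope Z_scope.

(* The cell [i,i+1] x [j,j+1] is labelled (i,j). *)
Definition cell := (Z * Z)%type.

Definition region := cell -> Prop.

Definition block (i j : Z) : region :=
  fun c => i <= fst c <= i + 1 /\ j <= snd c <= j + 1.

Definition is_L_tromino (T : region) : Prop :=
  exists (i j : Z) (m : cell), block i j m /\
    forall c, T c <-> (block i j c /\ c <> m).

Definition is_cover (R : region) (C : list region) : Prop :=
  (forall T, In T C -> is_L_tromino T) /\
  (forall T, In T C -> forall c, T c -> R c) /\
  (forall k l, (k < length C)%nat -> (l < length C)%nat -> k <> l ->
     forall c, ~ (nth k C (fun _ => False) c /\ nth l C (fun _ => False) c)) /\
  (forall c, R c -> exists T, In T C /\ T c).

Definition has_cover (R : region) : Prop := exists C, is_cover R C.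

Definition aztec_rect (a b : Z) : region :=
  fun c => 0 <= fst c + snd c <= 2 * b /\ 1 <= snd c - fst c <= 2 * a + 1.

(* Main.v *)
Require Import Defs.
From Stdlib Require Import ZArith List Lia.
Open Scope Z_scope.

Definition dflt : region := fun _ => False.

Lemma cover_ext (R R' : region) C :
  (forall c, R c <-> R' c) -> is_cover R C -> is_cover R' C.
Proof.
  intros H [H1 [H2 [H3 H4]]]; repeat split; auto.
  - intros T HT c Hc; apply H; eauto.
  - intros c Hc; apply H4; apply H; auto.
Qed.

Lemma cover_app R1 R2 C1 C2 :
  is_cover R1 C1 -> is_cover R2 C2 -> (forall c, R1 c -> R2 c -> False) ->
  is_cover (fun c => R1 c \/ R2 c) (C1 ++ C2).
Proof.
  intros [A1 [A2 [A3 A4]]] [B1 [B2 [B3 B4]]] D.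
  repeat split.
  - intros T HT; apply in_app_or in HT; destruct HT; auto.
  - intros T HT c Hc; apply in_app_or in HT; destruct HT; [left|right]; eauto.
  - intros k l Hk Hl Hkl c [Hck Hcl].
    rewrite length_app in Hk, Hl.
    destruct (Nat.lt_ge_cases k (length C1)) as [k1|k1];
    destruct (Nat.lt_ge_cases l (length C1)) as [l1|l1].
    + rewrite app_nth1 in Hck, Hcl by auto. exact (A3 k l k1 l1 Hkl c (conj Hck Hcl)).
    + rewrite app_nth1 in Hck by auto. rewrite app_nth2 in Hcl by auto.
      apply (D c).
      * eapply A2; [apply nth_In; exact k1|exact Hck].
      * eapply B2; [|exact Hcl]; apply nth_In; lia.
    + rewrite app_nth2 in Hck by auto. rewrite app_nth1 in Hcl by auto.
      apply (D c).
      * eapply A2; [apply nth_In; exact l1|exact Hcl].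
      * eapply B2; [|exact Hck]; apply nth_In; lia.
    + rewrite app_nth2 in Hck, Hcl by auto.
      refine (B3 (k - length C1)%nat (l - length C1)%nat _ _ _ c (conj Hck Hcl)); lia.
  - intros c [H|H].
    + destruct (A4 c H) as [T [HT HTc]]; exists T; split; auto; apply in_or_app; auto.
    + destruct (B4 c H) as [T [HT HTc]]; exists T; split; auto; apply in_or_app; auto.
Qed.

Definition shift (u v : Z) (T : region) : region := fun c => T (fst c - u, snd c - v).

Lemma L_shift u v T : is_L_tromino T -> is_L_tromino (shift u v T).
Proof.
  intros [i [j [m [Hm H]]]].
  exists (i+u), (j+v), (fst m + u, snd m + v).
  destruct m as [m1 m2]; unfold block in *; simpl in *; split; [lia|].
  intros [p q]; unfold shift; simpl; rewrite H; unfold block; simpl.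
  split; intros [H1 H2]; split; try lia.
  - intro E; injection E; intros; apply H2; f_equal; lia.
  - intro E; injection E; intros; apply H2; f_equal; lia.
Qed.

Lemma cover_shift u v R C :
  is_cover R C -> is_cover (shift u v R) (map (shift u v) C).
Proof.
  intros [A1 [A2 [A3 A4]]]; repeat split.
  - intros T HT; apply in_map_iff in HT; destruct HT as [T' [<- HT']].
    apply L_shift; auto.
  - intros T HT c Hc; apply in_map_iff in HT; destruct HT as [T' [<- HT']].
    unfold shift in *; eauto.
  - intros k l Hk Hl Hkl c [Hck Hcl].
    rewrite length_map in Hk, Hl.
    rewrite nth_indep with (d' := shift u v dflt) in Hck, Hcl by (rewrite length_map; auto).
    rewrite map_nth in Hck, Hcl. exact (A3 k l Hk Hl Hkl _ (conj Hck Hcl)).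
  - intros c Hc; destruct (A4 _ Hc) as [T [HT HTc]].
    exists (shift u v T); split; auto; apply in_map; auto.
Qed.

Lemma cover_family (f : nat -> region) n :
  (forall k, is_L_tromino (f k)) ->
  (forall k l c, f k c -> f l c -> k = l) ->
  is_cover (fun c => exists k, (k < n)%nat /\ f k c) (map f (seq 0 n)).
Proof.
  intros HL HD; repeat split.
  - intros T HT; apply in_map_iff in HT; destruct HT as [k [<- _]]; auto.
  - intros T HT c Hc; apply in_map_iff in HT; destruct HT as [k [<- Hk]].
    apply in_seq in Hk; exists k; split; [lia|auto].
  - intros k l Hk Hl Hkl c [Hck Hcl].
    rewrite length_map, length_seq in Hk, Hl.
    rewrite nth_indep with (d' := f 0%nat) in Hck, Hcl by (rewrite length_map, length_seq; auto).
    rewrite map_nth, seq_nth in Hck, Hcl by auto.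
    apply Hkl; eapply HD; eauto.
  - intros c [k [Hk Hc]]; exists (f k); split; auto.
    apply in_map; apply in_seq; lia.
Qed.

Definition stripA (S d0 : Z) : region :=
  fun c => S <= fst c + snd c <= S + 1 /\ d0 <= snd c - fst c <= d0 + 2.
Definition stripB (S d0 : Z) : region :=
  fun c => S <= fst c + snd c <= S + 2 /\ d0 <= snd c - fst c <= d0 + 1.

Lemma pair_neq (p q x y : Z) : (p, q) <> (x, y) -> p <> x \/ q <> y.
Proof.
  intros H; destruct (Z.eq_dec p x); destruct (Z.eq_dec q y); subst; auto.
Qed.

Lemma stripA_L S d0 : is_L_tromino (stripA S d0).
Proof.
  destruct (Z.Even_or_Odd (S + d0)) as [[t Ht]|[t Ht]].
  - exists (t - d0 - 1), t, (t - d0 - 1, t).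
    split; [unfold block; simpl; lia|].
    unfold block, stripA; intros [p q]; simpl; split.
    + intros H; split; [lia|]. intro E; injection E; intros; lia.
    + intros [H1 H2]; apply pair_neq in H2; lia.
  - exists (t - d0), (t + 1), (t - d0 + 1, t + 2).
    split; [unfold block; simpl; lia|].
    unfold block, stripA; intros [p q]; simpl; split.
    + intros H; split; [lia|]. intro E; injection E; intros; lia.
    + intros [H1 H2]; apply pair_neq in H2; lia.
Qed.

Lemma stripB_L S d0 : is_L_tromino (stripB S d0).
Proof.
  destruct (Z.Even_or_Odd (S + d0)) as [[t Ht]|[t Ht]].
  - exists (t - d0), t, (t - d0 + 1, t).
    split; [unfold block; simpl; lia|].
    unfold block, stripB; intros [p q]; simpl; split.
    + intros H; split; [lia|]. intro E; injection E; intros; lia.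
    + intros [H1 H2]; apply pair_neq in H2; lia.
  - exists (t - d0), (t + 1), (t - d0, t + 2).
    split; [unfold block; simpl; lia|].
    unfold block, stripB; intros [p q]; simpl; split.
    + intros H; split; [lia|]. intro E; injection E; intros; lia.
    + intros [H1 H2]; apply pair_neq in H2; lia.
Qed.

Lemma cover_stripsA S d0 N : 0 <= N ->
  is_cover (fun c => S <= fst c + snd c <= S + 1 /\ d0 <= snd c - fst c <= d0 + 3 * N - 1)
    (map (fun k => stripA S (d0 + 3 * Z.of_nat k)) (seq 0 (Z.to_nat N))).
Proof.
  intros HN. eapply cover_ext; [|apply cover_family].
  - intros [p q]; unfold stripA; cbn [fst snd]; split.
    + intros [k [Hk H]]. apply Nat2Z.inj_lt in Hk; rewrite Z2Nat.id in Hk by lia. lia.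
    + intros H. exists (Z.to_nat ((q - p - d0) / 3)).
      pose proof (Z.div_mod (q - p - d0) 3 ltac:(lia)).
      pose proof (Z.mod_pos_bound (q - p - d0) 3 ltac:(lia)).
      assert (0 <= (q - p - d0) / 3) by (apply Z.div_pos; lia).
      split.
      * apply Nat2Z.inj_lt; rewrite !Z2Nat.id by lia. lia.
      * rewrite Z2Nat.id by lia. lia.
  - intros; apply stripA_L.
  - intros k l [p q]; unfold stripA; cbn [fst snd]; intros; lia.
Qed.

Lemma cover_stripsB S d0 N : 0 <= N ->
  is_cover (fun c => S <= fst c + snd c <= S + 3 * N - 1 /\ d0 <= snd c - fst c <= d0 + 1)
    (map (fun k => stripB (S + 3 * Z.of_nat k) d0) (seq 0 (Z.to_nat N))).
Proof.
  intros HN. eapply cover_ext; [|apply cover_family].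
  - intros [p q]; unfold stripB; cbn [fst snd]; split.
    + intros [k [Hk H]]. apply Nat2Z.inj_lt in Hk; rewrite Z2Nat.id in Hk by lia. lia.
    + intros H. exists (Z.to_nat ((q + p - S) / 3)).
      pose proof (Z.div_mod (q + p - S) 3 ltac:(lia)).
      pose proof (Z.mod_pos_bound (q + p - S) 3 ltac:(lia)).
      assert (0 <= (q + p - S) / 3) by (apply Z.div_pos; lia).
      split.
      * apply Nat2Z.inj_lt; rewrite !Z2Nat.id by lia. lia.
      * rewrite Z2Nat.id by lia. lia.
  - intros; apply stripB_L.
  - intros k l [p q]; unfold stripB; cbn [fst snd]; intros; lia.
Qed.

Theorem lemma2 (a b : Z) :
  0 < a -> 0 < b -> (3 | a) -> (3 | b) ->
  has_cover (aztec_rect a b) -> has_cover (aztec_rect (a + 2) (b + 2)).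
Proof.
  intros Ha Hb [m Hm] [n Hn] [C HC].
  pose proof (cover_shift 0 2 _ _ HC) as H0.
  pose proof (cover_stripsA 0 1 (2 * m + 1) ltac:(lia)) as HA.
  pose proof (cover_stripsA (2 * b + 3) 3 (2 * m + 1) ltac:(lia)) as HB.
  pose proof (cover_stripsB 0 (2 * a + 4) (2 * n + 1) ltac:(lia)) as HD.
  pose proof (cover_stripsB 2 1 (2 * n + 1) ltac:(lia)) as HC'.
  pose proof (cover_app _ _ _ _ HD HC' ltac:(intros [p q]; cbn [fst snd]; lia)) as H1.
  pose proof (cover_app _ _ _ _ HB H1 ltac:(intros [p q]; cbn [fst snd]; lia)) as H2.
  pose proof (cover_app _ _ _ _ HA H2 ltac:(intros [p q]; cbn [fst snd]; lia)) as H3.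
  pose proof (cover_app _ _ _ _ H0 H3
    ltac:(intros [p q]; unfold shift, aztec_rect; cbn [fst snd]; lia)) as H4.
  eexists; eapply cover_ext; [|exact H4].
  intros [p q]; unfold shift, aztec_rect; cbn [fst snd]; lia.
Qed.
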